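(* Let $C\subseteq\{0,1\}^n$ with $|C|=2^{Rn}$, let $\Pi=\{A_i\}_{i\in\{0,1\}^{R'n}}$ be a partition of $C$ into $2^{R'n}$ sets of size $2^{\ell}$ with $R'n=Rn-\ell$, and let $C_\Pi$ be the stochastic code that encodes message $i$ as a uniformly random element of $A_i$. Let $L\ge1$. If for every view $V\in\{0,1,?\}^n$ with exactly $\rho_r n$ non-$?$ coordinates and every message index $i$, \[\#\{x\in A_i : x\text{ is consistent with }V\}<L,\] then the equivocation of $C_\Pi$ satisfies $\Delta\ge Rn-\rho_r n-\log_2 L$.
   Context: A codeword $x$ is consistent with a view $V=(v_1,\dots,v_n)\in\{0,1,?\}^n$ if $x_i=v_i$ whenever $v_i\ne ?$. With $\mathbf S$ the uniformly random message, $\mathbf X$ its (random) encoding, and for $\mathscr S\subseteq[n]$ of size $\rho_r n$, $\mathbf V(\mathscr S)$ the string equal to $\mathbf X$ on $\mathscr S$ and $?$ elsewhere, the equivocation is $\Delta=\min_{|\mathscr S|=\rho_r n}H(\mathbf S\mid\mathbf V(\mathscr S))$. *)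

(* Defs.v *)
From mathcomp Require Import all_boot.
From Stdlib Require Import Reals.
Set Implicit Arguments. Unset Strict Implicit. Unset Printing Implicit Defensive.

Definition word (n : nat) := {ffun 'I_n -> bool}.
(* views V in {0,1,?}^n ; None encodes "?" *)
Definition view_t (n : nat) := {ffun 'I_n -> option bool}.

Definition consistent n (x : word n) (V : view_t n) : bool :=
  [forall j, if V j is Some b then x j == b else true].

Definition nrevealed n (V : view_t n) : nat := #|[set j | V j != None]|.

Definition viewOn n (S : {set 'I_n}) (x : word n) : view_t n :=
  [ffun j => if j \in S then Some (x j) else None].

Definition log2 (x : R) : R := (ln x / ln 2)%R.

Definition rsum (T : finType) (P : pred T) (F : T -> R) : R :=
  \big[Rplus/0%R]_(t | P t) F t.

(* Stochastic code C_Pi: message i uniform over the message set M,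
   encoded as a uniformly random element of A i.
   Joint probability P(S = i, V(S) = v). *)
Definition jointP n (M : finType) (A : M -> {set word n}) (S : {set 'I_n})
  (i : M) (v : view_t n) : R :=
  rsum (fun x => (x \in A i) && (viewOn S x == v))
       (fun _ => (/ (INR #|M| * INR #|A i|))%R).

Definition viewP n (M : finType) (A : M -> {set word n}) (S : {set 'I_n})
  (v : view_t n) : R :=
  rsum predT (fun i => jointP A S i v).

Definition condEntropy n (M : finType) (A : M -> {set word n})
  (S : {set 'I_n}) : R :=
  rsum predT (fun i : M => rsum predT (fun v : view_t n =>
    let p := jointP A S i v in
    if Rlt_dec 0 p then (- p * log2 (p / viewP A S v))%R else 0%R)).

(* Main.v *)
Require Import Defs.
From HB Require Import structures.
From mathcomp Require Import all_boot.
From Stdlib Require Import Reals Lra.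

HB.instance Definition _ := Monoid.isComLaw.Build R 0%R Rplus (fun x y z => esym (Rplus_assoc x y z)) Rplus_comm Rplus_0_l.

Section H.
Local Open Scope R_scope.

Lemma rsum_const (T : finType) (P : pred T) c : rsum P (fun _ => c) = INR #|P| * c.
Proof.
rewrite /rsum big_const; elim: #|P| => [|m IH]; first (simpl; ring).
rewrite [iter _ _ _]/= IH S_INR; ring.
Qed.

Lemma rsum_le (T : finType) (P : pred T) F G :
  (forall t, P t -> F t <= G t) -> rsum P F <= rsum P G.
Proof. move=> H; rewrite /rsum; elim/big_ind2: _ => //; [lra|]; move=> *; lra. Qed.

Lemma rsum_ge0 (T : finType) (P : pred T) F :
  (forall t, P t -> 0 <= F t) -> 0 <= rsum P F.
Proof. move=> H; rewrite /rsum; elim/big_ind: _ => //; [lra|]; move=> *; lra. Qed.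

Lemma rsum_scal (T : finType) (P : pred T) F c :
  rsum P (fun t => F t * c) = rsum P F * c.
Proof. rewrite /rsum; elim/big_rec2: _ => [|t x y _ ->]; ring. Qed.

Lemma rsum_add (T : finType) (P : pred T) F G :
  rsum P (fun t => F t + G t) = rsum P F + rsum P G.
Proof. by rewrite /rsum big_split. Qed.

Lemma rsum_ext (T : finType) (P : pred T) F G :
  (forall t, P t -> F t = G t) -> rsum P F = rsum P G.
Proof. move=> H; rewrite /rsum; exact: eq_bigr. Qed.

Lemma INR_expn2 m : INR (expn 2 m) = pow 2 m.
Proof. elim: m => [|m IH]; first (simpl; ring). rewrite expnS mult_INR IH /=; ring. Qed.

Lemma ln_le_m1 y : 0 < y -> ln y <= y - 1.
Proof. move=> Hy; have := exp_ineq1_le (ln y); rewrite exp_ln //; lra. Qed.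

Lemma ln2_pos : 0 < ln 2.
Proof. have := ln_lt_2; lra. Qed.


Lemma ent_bound (T : finType) (Q : T -> R) (Ts : {set T}) r :
  (forall v, 0 <= Q v) -> rsum predT Q = 1 -> (forall v, v \notin Ts -> Q v = 0) ->
  leq #|Ts| (expn 2 r) ->
  - INR r <= rsum predT (fun v => Q v * (if Rlt_dec 0 (Q v) then log2 (Q v) else 0)).
Proof.
move=> Q0 Q1 Qout Tc.
have N0 : 0 < pow 2 r by apply pow_lt; lra.
have l2 := ln2_pos.
have iN0 : 0 < / pow 2 r by apply Rinv_0_lt_compat.
have il2 : 0 < / ln 2 by apply Rinv_0_lt_compat.
have pt : forall v, Q v * (- INR r) + (Q v * / ln 2 + (- (/ pow 2 r * / ln 2)))
    <= Q v * (if Rlt_dec 0 (Q v) then log2 (Q v) else 0).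
  move=> v; case: Rlt_dec => Hq.
  - rewrite /log2.
    have := @ln_le_m1 _ (Rinv_0_lt_compat _ (Rmult_lt_0_compat _ _ N0 Hq)).
    rewrite ln_Rinv; last by apply Rmult_lt_0_compat.
    rewrite ln_mult // ln_pow; last lra.
    move=> Hl.
    have H2 := Rmult_le_compat_l (Q v) _ _ (Rlt_le _ _ Hq) Hl.
    have E : Q v * / (pow 2 r * Q v) = / pow 2 r by field; lra.
    have E1 : Q v * - INR r + (Q v * / ln 2 + - (/ pow 2 r * / ln 2)) =
       (Q v * (- INR r * ln 2) + Q v - / pow 2 r) * / ln 2 by field; lra.
    have E2 : Q v * (ln (Q v) / ln 2) = (Q v * ln (Q v)) * / ln 2 by rewrite /Rdiv; ring.
    rewrite E1 E2; apply Rmult_le_compat_r; first lra.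
    nra.
  - simpl; have -> : Q v = 0 by have := Q0 v; lra.
    have : 0 < / pow 2 r * / ln 2 by apply Rmult_lt_0_compat.
    lra.
rewrite /rsum (bigID (fun v => v \in Ts)) /=.
rewrite [X in _ + X]big1; last by move=> v /Qout ->; ring.
have Q1' : \big[Rplus/0]_(i | i \in Ts) Q i = 1.
  rewrite -Q1 /rsum (bigID (fun v => v \in Ts) predT) /=.
  rewrite [X in _ = _ + X]big1; last by move=> v /Qout ->.
  by rewrite Rplus_0_r.
have Hle := @rsum_le _ (fun v => v \in Ts) _ _ (fun t _ => pt t).
rewrite /rsum in Hle.
rewrite Rplus_0_r; eapply Rle_trans; last exact Hle.
rewrite big_split /= -/(rsum _ _) -/(rsum _ _) -/(rsum _ _).
rewrite rsum_scal rsum_add rsum_scal rsum_const.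
have Q1'' : rsum (fun t => t \in Ts) Q = 1 := Q1'.
rewrite Q1''.
set c := INR #|_|.
have HT : c <= pow 2 r.
  rewrite /c -INR_expn2; apply le_INR; apply/leP.
  apply: leq_trans Tc; rewrite leq_eqVlt; apply/orP; left; apply/eqP; exact: eq_card.
have E : pow 2 r * (/ pow 2 r * / ln 2) = / ln 2 by field; lra.
have : c * (/ pow 2 r * / ln 2) <= pow 2 r * (/ pow 2 r * / ln 2).
  apply Rmult_le_compat_r; last exact HT.
  by apply Rlt_le, Rmult_lt_0_compat.
rewrite E; lra.
Qed.
End H.

Lemma consistent_viewOn n (S : {set 'I_n}) (x y : word n) :
  consistent x (viewOn S y) = (viewOn S x == viewOn S y).
Proof.
apply/forallP/eqP.
- move=> H; apply/ffunP => j; have := H j; rewrite !ffunE.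
  by case: (j \in S) => // /eqP ->.
- move=> E j; have := congr1 (fun f : view_t n => f j) E; rewrite /= !ffunE.
  by case: (j \in S) => // [[->]].
Qed.

Lemma nrevealed_viewOn n (S : {set 'I_n}) (y : word n) : nrevealed (viewOn S y) = #|S|.
Proof.
rewrite /nrevealed; apply: eq_card => j; rewrite inE ffunE.
by case: (j \in S).
Qed.

Lemma expn_pow a b : expn a b = Nat.pow a b.
Proof. elim: b => //= b IH. by rewrite expnS IH. Qed.

Lemma card_views n (S : {set 'I_n}) :
  (#|[set viewOn S x | x in [set: word n]]| <= 2 ^ #|S|)%N.
Proof.
set g := fun v : view_t n => [ffun j : 'I_#|S| => odflt false (v (enum_val j))].
rewrite -(card_in_imset (f := g)).
  apply: (leq_trans (max_card _)); by rewrite card_ffun card_bool card_ord expn_pow.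
move=> v1 v2 /imsetP[x1 _ ->] /imsetP[x2 _ ->] E.
apply/ffunP => j; rewrite !ffunE; case: (boolP (j \in S)) => hj //.
have := congr1 (fun f : {ffun 'I_#|S| -> bool} => f (enum_rank_in hj j)) E.
by rewrite /g /= !ffunE (enum_rankK_in hj hj) hj /= => ->.
Qed.

Theorem corollary4p2 (n k l r : nat) (C : {set word n})
  (A : {ffun 'I_(k - l) -> bool} -> {set word n}) (L : R) :
  (l <= k)%N ->
  #|C| = 2 ^ k ->
  (forall i, A i \subset C) ->
  (forall i j, i <> j -> [disjoint A i & A j]) ->
  (forall x, x \in C -> exists i, x \in A i) ->
  (forall i, #|A i| = 2 ^ l) ->
  (1 <= L)%R ->
  (forall (V : view_t n) i, nrevealed V = r ->
     (INR #|[set x in A i | consistent x V]| < L)%R) ->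
  forall S : {set 'I_n}, #|S| = r ->
    (INR k - INR r - log2 L <= condEntropy A S)%R.
Proof.
move=> lk cardC sub disj cov cardA L1 Hv S cS.
have D : forall i, (INR #|{ffun 'I_(k - l) -> bool}| * INR #|A i| = pow 2 k)%R.
  move=> i; rewrite card_ffun card_bool card_ord cardA -!expn_pow !INR_expn2 -pow_add.
  have E : (k - l + l = k)%N by rewrite subnK.
  by congr pow.
have K0 : (0 < pow 2 k)%R by apply pow_lt; lra.
set P := jointP A S.
set Q := viewP A S.
have Pdef : forall i v, P i v =
   (INR #|(fun x => (x \in A i) && (viewOn S x == v))| * / pow 2 k)%R.
  by move=> i v; rewrite /P /jointP rsum_const D.
have P0 : forall i v, (0 <= P i v)%R.
  move=> i v; rewrite Pdef; apply Rmult_le_pos; first exact: pos_INR.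
  by apply Rlt_le, Rinv_0_lt_compat.
have Pbnd : forall i v, (0 < P i v -> P i v < L * / pow 2 k)%R.
  move=> i v; rewrite Pdef => Hp.
  have : (0 < #|(fun x => (x \in A i) && (viewOn S x == v))|)%N.
    move: Hp; case: #|_| => //=; rewrite Rmult_0_l => /Rlt_irrefl [].
  case/card_gt0P => x /andP [_ /eqP Ex].
  apply Rmult_lt_compat_r; first by apply Rinv_0_lt_compat.
  have := Hv (viewOn S x) i; rewrite nrevealed_viewOn cS => /(_ erefl).
  suff -> : #|[set y in A i | consistent y (viewOn S x)]| =
            #|(fun x => (x \in A i) && (viewOn S x == v))| by [].
  by apply: eq_card => y; rewrite inE consistent_viewOn Ex.
have PleQ : forall i v, (P i v <= Q v)%R.
  move=> i v; rewrite /Q /viewP /rsum (bigD1 i) //= -/P.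
  have := @rsum_ge0 _ (fun j => j != i) (fun j => P j v) (fun j _ => P0 j v).
  rewrite /rsum => H; rewrite -[X in (X <= _)%R]Rplus_0_r; apply Rplus_le_compat_l; exact H.
set Ts := [set viewOn S x | x in [set: word n]].
have Qout : forall v, v \notin Ts -> Q v = 0%R.
  move=> v vT; rewrite /Q /viewP /rsum big1 // => i _; rewrite -/P Pdef.
  suff -> : #|(fun x => (x \in A i) && (viewOn S x == v))| = 0%N by rewrite Rmult_0_l.
  apply/eqP; rewrite -leqn0 leqNgt; apply/negP => /card_gt0P [x /andP [_ /eqP Ex]].
  by move: vT; rewrite -Ex; move/negP; apply; apply/imsetP; exists x.
have Mpos : (0 < INR #|{ffun 'I_(k - l) -> bool}|)%R.
  apply lt_0_INR; apply/ltP; apply/card_gt0P; by exists [ffun=> false].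
have Apos : forall i, (0 < INR #|A i|)%R.
  move=> i; apply lt_0_INR; apply/ltP; rewrite cardA -expn_pow expn_gt0.
  done.
have Prow : forall i, rsum predT (fun v => P i v) = (/ INR #|{ffun 'I_(k - l) -> bool}|)%R.
  move=> i; rewrite /P /jointP /rsum.
  under eq_bigr => v _ do rewrite big_mkcondr /=.
  rewrite exchange_big /=.
  under eq_bigr => x _.
    rewrite (eq_bigr (fun v => if v == viewOn S x then
      (/ (INR #|{ffun 'I_(k - l) -> bool}| * INR #|A i|))%R else 0%R)); last first.
      by move=> v _; rewrite eq_sym.
    rewrite -big_mkcond big_pred1_eq.
    over.
  rewrite -/(rsum _ _) rsum_const.
  have -> : #|(fun x => x \in A i)| = #|A i| by apply: eq_card.
  field; split; apply: Rgt_not_eq; [exact: Mpos | exact: Apos].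
have Qsum : rsum predT Q = 1%R.
  rewrite /Q /viewP /rsum exchange_big /=.
  under eq_bigr => i _ do rewrite -/(rsum _ _) Prow.
  rewrite -/(rsum _ _) rsum_const.
  rewrite (_ : #|_| = #|{ffun 'I_(k - l) -> bool}|); last by apply: eq_card.
  field; apply: Rgt_not_eq; exact: Mpos.
have Q0 : forall v, (0 <= Q v)%R.
  move=> v; have i : {ffun 'I_(k - l) -> bool} by exact: [ffun=> false].
  exact: Rle_trans (P0 i v) (PleQ i v).
have Ent := @ent_bound _ Q Ts r Q0 Qsum Qout.
have := @card_views n S; rewrite -expn_pow cS => /Ent {}Ent.
have l2 := ln2_pos.
set h := fun v => if Rlt_dec 0 (Q v) then log2 (Q v) else 0%R.
set Kc := (INR k - log2 L)%R.
have St1 : (rsum predT (fun i => rsum predT (fun v => P i v * (Kc + h v))) <= condEntropy A S)%R.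
  rewrite /condEntropy -/P -/Q.
  apply rsum_le => i _; apply rsum_le => v _; cbv zeta.
  case: (Rlt_dec 0 (P i v)) => Hp.
  - have Hq : (0 < Q v)%R by apply: Rlt_le_trans Hp (PleQ i v).
    rewrite /h; destruct (Rlt_dec 0 (Q v)) as [Hq'|Hn]; last by contradiction. simpl.
    rewrite /Kc /log2 /Rdiv ln_mult //; last by apply Rinv_0_lt_compat.
    rewrite ln_Rinv //.
    have L0 : (0 < L)%R by lra.
    have HlnP : (ln (P i v) < ln L - INR k * ln 2)%R.
      rewrite -ln_pow; last lra.
      rewrite /Rminus -ln_Rinv; last by apply pow_lt; lra.
      rewrite -ln_mult //; last by apply Rinv_0_lt_compat, pow_lt; lra.
      apply ln_increasing => //; exact: Pbnd.
    have E1 : (P i v * (INR k - ln L * / ln 2 + ln (Q v) * / ln 2) =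
       (P i v * (INR k * ln 2 - ln L + ln (Q v))) * / ln 2)%R by field; lra.
    have E2 : (- P i v * ((ln (P i v) + - ln (Q v)) * / ln 2) =
       (P i v * (ln (Q v) - ln (P i v))) * / ln 2)%R by field; lra.
    rewrite E1 E2; apply Rmult_le_compat_r; first by apply Rlt_le, Rinv_0_lt_compat.
    apply Rmult_le_compat_l; lra.
  - simpl; have -> : P i v = 0%R by have := P0 i v; lra.
    lra.
have St2 : rsum predT (fun i => rsum predT (fun v => P i v * (Kc + h v)))%R =
           (Kc + rsum predT (fun v => Q v * h v))%R.
  rewrite /rsum exchange_big /=.
  under eq_bigr => v _ do rewrite -/(rsum _ _) rsum_scal.
  rewrite -/(rsum _ _).
  rewrite (@rsum_ext _ _ _ (fun v => Q v * Kc + Q v * h v)%R); last first.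
    move=> v _; rewrite (_ : rsum _ _ = Q v) //; ring.
  by rewrite rsum_add rsum_scal Qsum Rmult_1_l.
move: St1; rewrite St2 /Kc.
set X := rsum _ (fun v => Q v * h v)%R.
have -> : X = rsum predT (fun v => Q v * (if Rlt_dec 0 (Q v) then log2 (Q v) else 0))%R by [].
lra.
Qed.
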